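(* Let $\rho$ be a regular ordinal, let $\Gamma$ be a presheaf on $\mathbb{T}$, let $X$ be a family over $\Gamma$ all of whose fibres $X(\mathcal{E},\vartheta,\gamma)$ have cardinality strictly smaller than $\rho$, and let $\varphi$ be a predicate over $(\Gamma.X)\times\mathrm{Clk}$. Then for every object $(\mathcal{E},\vartheta)$ of $\mathbb{T}$ and every $\gamma\in\Gamma(\mathcal{E},\vartheta)$ the following are equivalent: (A) there exists $x\in X(\mathcal{E},\vartheta,\gamma)$ such that for all $\alpha<\rho$, $\star\in\varphi(\mathcal{E}\cup\{\lambda_\mathcal{E}\},\vartheta[\lambda_\mathcal{E}\mapsto\alpha],\iota\cdot\gamma,\iota\cdot x,\lambda_\mathcal{E})$; (B) for all $\alpha<\rho$ there exists $x\in X(\mathcal{E}\cup\{\lambda_\mathcal{E}\},\vartheta[\lambda_\mathcal{E}\mapsto\alpha],\iota\cdot\gamma)$ such that $\star\in\varphi(\mathcal{E}\cup\{\lambda_\mathcal{E}\},\vartheta[\lambda_\mathcal{E}\mapsto\alpha],\iota\cdot\gamma,x,\lambda_\mathcal{E})$. (That is, in the model, $\exists x{:}X.\,\forall\kappa.\,\varphi(x,\kappa)$ equals $\forall\kappa.\,\exists x{:}X.\,\varphi(x,\kappa)$.)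
   Context: Fix a limit ordinal $\rho$ (here assumed regular, i.e. equal to its own cofinality) and a countably infinite set of clock names. The category $\mathbb{T}$ has objects pairs $(\mathcal{E},\vartheta)$ with $\mathcal{E}$ a finite set of clock names and $\vartheta:\mathcal{E}\to\rho$; a morphism $(\mathcal{E},\vartheta)\to(\mathcal{E}',\vartheta')$ is a function $\sigma:\mathcal{E}\to\mathcal{E}'$ with $\vartheta'\circ\sigma\le\vartheta$ pointwise. A presheaf on $\mathbb{T}$ is a covariant functor $\mathbb{T}\to\mathsf{Set}$; write $\sigma\cdot x$ for the action of $\sigma$. $\mathrm{Clk}$ is the presheaf $\mathrm{Clk}(\mathcal{E},\vartheta)=\mathcal{E}$ with $\sigma\cdot\lambda=\sigma(\lambda)$. For a presheaf $\Gamma$, $\int\Gamma$ is its category of elements, with objects $(\mathcal{E},\vartheta,\gamma)$; a presheaf $X$ over $\int\Gamma$ is a covariant functor $\int\Gamma\to\mathsf{Set}$ with fibres $X(\mathcal{E},\vartheta,\gamma)$ and maps $\sigma\cdot(-)$. $X$ is invariant under clock introduction if for all $(\mathcal{E},\vartheta)$, $\gamma$, clock names $\lambda\notin\mathcal{E}$ and $\alpha<\rho$, the map $\iota\cdot(-): X(\mathcal{E},\vartheta,\gamma)\to X(\mathcal{E}\cup\{\lambda\},\vartheta[\lambda\mapsto\alpha],\iota\cdot\gamma)$ induced by the inclusion $\iota:\mathcal{E}\to\mathcal{E}\cup\{\lambda\}$ is a bijection. A family over $\Gamma$ is a presheaf over $\int\Gamma$ invariant under clock introduction; a predicate is a family all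 of whose fibres are subsets of $\{\star\}$. The comprehension $\Gamma.X$ is the presheaf $(\Gamma.X)(\mathcal{E},\vartheta)=\{(\gamma,x)\mid\gamma\in\Gamma(\mathcal{E},\vartheta), x\in X(\mathcal{E},\vartheta,\gamma)\}$; thus a predicate $\varphi$ over $(\Gamma.X)\times\mathrm{Clk}$ has fibres $\varphi(\mathcal{E},\vartheta,\gamma,x,\lambda)\subseteq\{\star\}$ for $\lambda\in\mathcal{E}$. A function assigning to each finite set $\mathcal{E}$ of clock names a clock name $\lambda_\mathcal{E}\notin\mathcal{E}$ is fixed, and $\iota$ denotes the inclusion $\mathcal{E}\to\mathcal{E}\cup\{\lambda_\mathcal{E}\}$, viewed as a morphism $(\mathcal{E},\vartheta)\to(\mathcal{E}\cup\{\lambda_\mathcal{E}\},\vartheta[\lambda_\mathcal{E}\mapsto\alpha])$. *)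

(* Defs.v *)
From HB Require Import structures.
From mathcomp Require Import all_boot finmap.
Set Implicit Arguments. Unset Strict Implicit. Unset Printing Implicit Defensive.
Local Open Scope fset_scope.

(** Clock names are natural numbers (a countably infinite set).
    Elements of a finite set of clock names E, seen as a type. *)
Definition cl (E : {fset nat}) := {x : nat | x \in E}.

Lemma inclP (E : {fset nat}) (l : nat) (x : cl E) : sval x \in E `|` [fset l].
Proof. by rewrite in_fsetU (svalP x). Qed.

Definition incl (E : {fset nat}) (l : nat) (x : cl E) : cl (E `|` [fset l]) :=
  exist _ (sval x) (inclP l x).

Lemma newclP (E : {fset nat}) (l : nat) : l \in E `|` [fset l].
Proof. by rewrite in_fsetU in_fset1 eqxx orbT. Qed.

Definition newcl (E : {fset nat}) (l : nat) : cl (E `|` [fset l]) :=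
  exist _ l (newclP E l).

Section Ordinal.
(** The ordinal rho is represented by a type O of its elements (the ordinals
    alpha < rho) together with the strict order lt. *)
Variables (O : Type) (lt : O -> O -> Prop).

Definition le (a b : O) : Prop := a = b \/ lt a b.

Definition is_wellorder : Prop :=
  (forall a, ~ lt a a) /\
  (forall a b c, lt a b -> lt b c -> lt a c) /\
  (forall a b, lt a b \/ a = b \/ lt b a) /\
  well_founded lt.

(** rho is a limit ordinal: nonzero and not a successor *)
Definition is_limit : Prop := inhabited O /\ forall a, exists b, lt a b.

Definition cofinal (A : Type) (f : A -> O) : Prop :=
  forall c, exists i, le c (f i).

(** rho = cf(rho): no ordinal alpha < rho admits a cofinal map alpha -> rho *)
Definition is_regular : Prop :=
  forall (a : O) (f : {b : O | lt b a} -> O), ~ cofinal f.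

Definition card_lt_rho (A : Type) : Prop :=
  (exists f : A -> O, injective f) /\ ~ (exists g : O -> A, injective g).

(** Objects of the category T: (E, theta) with theta : E -> rho *)
Record obj := Obj { clocks : {fset nat}; valu : cl clocks -> O }.
Arguments valu o _ : clear implicits.

Definition Hom (o o' : obj) :=
  {f : cl (clocks o) -> cl (clocks o') | forall x, le (valu o' (f x)) (valu o x)}.

Definition hfun (o o' : obj) (s : Hom o o') : cl (clocks o) -> cl (clocks o') :=
  proj1_sig s.
Arguments hfun {o o'} s _.

(** theta[l |-> a] on E ∪ {l} *)
Definition ext (o : obj) (l : nat) (a : O) : obj :=
  @Obj (clocks o `|` [fset l])
    (fun x => match @insub _ (fun y => y \in clocks o) (cl (clocks o)) (sval x) with
              | Some y => valu o y
              | None => a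
              end).

Lemma iotaP (o : obj) (l : nat) (a : O) (x : cl (clocks o)) :
  le (valu (ext o l a) (incl l x)) (valu o x).
Proof. by left; rewrite /= valK. Qed.

Definition iotaH (o : obj) (l : nat) (a : O) : Hom o (ext o l a) :=
  exist _ (@incl (clocks o) l) (@iotaP o l a).

(** Presheaves (covariant functors T -> Set): data, and functor laws *)
Record psh := Psh {
  pob : obj -> Type;
  pact : forall o o' : obj, Hom o o' -> pob o -> pob o' }.
Arguments pob p o : clear implicits.
Arguments pact p {o o'} _ _.

Definition is_presheaf (P : psh) : Prop :=
  (forall o (s : Hom o o) (x : pob P o),
      (forall y, hfun s y = y) -> pact P s x = x) /\
  (forall o1 o2 o3 (s : Hom o1 o2) (t : Hom o2 o3) (u : Hom o1 o3) (x : pob P o1),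
      (forall y, hfun u y = hfun t (hfun s y)) -> pact P u x = pact P t (pact P s x)).

(** Presheaves over the category of elements of G: a morphism
    (o,g) -> (o',g') is a morphism s : o -> o' with s . g = g'. *)
Record epsh (G : psh) := EPsh {
  eob : forall o : obj, pob G o -> Type;
  eact : forall (o o' : obj) (s : Hom o o') (g : pob G o) (g' : pob G o'),
           pact G s g = g' -> eob g -> eob g' }.
Arguments eob {G} e {o} _.
Arguments eact {G} e {o o'} s {g g'} _ _.

Definition is_epresheaf (G : psh) (X : epsh G) : Prop :=
  (forall o (s : Hom o o) (g : pob G o) (h : pact G s g = g) (x : eob X g),
      (forall y, hfun s y = y) -> eact X s h x = x) /\
  (forall o1 o2 o3 (s : Hom o1 o2) (t : Hom o2 o3) (u : Hom o1 o3)
          (g1 : pob G o1) (g2 : pob G o2) (g3 : pob G o3)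
          (h1 : pact G s g1 = g2) (h2 : pact G t g2 = g3) (h3 : pact G u g1 = g3)
          (x : eob X g1),
      (forall y, hfun u y = hfun t (hfun s y)) -> eact X u h3 x = eact X t h2 (eact X s h1 x)).

(** Families: presheaves over ∫G invariant under clock introduction *)
Definition is_family (G : psh) (X : epsh G) : Prop :=
  is_epresheaf X /\
  forall (o : obj) (g : pob G o) (l : nat) (a : O), l \notin clocks o ->
    bijective (fun x : eob X g =>
                 eact X (iotaH o l a) (erefl (pact G (iotaH o l a) g)) x).

(** Predicates: families whose fibres are subsingletons (subsets of {*}) *)
Definition is_predicate (G : psh) (P : epsh G) : Prop :=
  is_family P /\ forall o (g : pob G o) (x y : eob P g), x = y.

Definition Clk : psh := @Psh (fun o => cl (clocks o)) (fun o o' s => hfun s).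

Definition compr (G : psh) (X : epsh G) : psh :=
  @Psh (fun o => {g : pob G o & eob X g})
       (fun o o' s p => existT _ (pact G s (projT1 p))
                          (eact X s (erefl (pact G s (projT1 p))) (projT2 p))).

Definition prodp (A B : psh) : psh :=
  @Psh (fun o => (pob A o * pob B o)%type)
       (fun o o' s p => (pact A s p.1, pact B s p.2)).

End Ordinal.

Arguments pob {O lt} p o.
Arguments pact {O lt} p {o o'} s x.
Arguments eob {O lt G} e {o} g.
Arguments eact {O lt G} e {o o'} s {g g'} h x.

(* Main.v *)
From Pilot Require Import Defs.
From HB Require Import structures.
From mathcomp Require Import all_boot finmap.
From Stdlib Require Import Classical ClassicalEpsilon FunctionalExtensionality.

Section Reg.
Variables (O : Type) (lt : O -> O -> Prop) (Hwo : is_wellorder lt) (Hreg : is_regular lt)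
  (A : Type) (c : A -> O) (Hcof : forall a0, exists y, Pilot.Defs.le lt a0 (c y)).

Definition condE {a : O} (rec : forall b, lt b a -> option O) (t : O) : Prop :=
  (exists y, t = c y) /\ forall b (hb : lt b a), exists s, rec b hb = Some s /\ lt s t.

Definition FE {a : O} (rec : forall b, lt b a -> option O) : option O :=
  match excluded_middle_informative (exists t, condE rec t) with
  | left h => Some (proj1_sig (constructive_indefinite_description _ h))
  | right _ => None
  end.

Definition EE : O -> option O := Fix (proj2 (proj2 (proj2 Hwo))) (fun _ => option O) (@FE).

Lemma EE_eq a : EE a = @FE a (fun b _ => EE b).
Proof.
  unfold EE; apply (Fix_eq _ (fun _ => option O) (@FE)) => x f g Hfg.
  have -> : f = g by apply functional_extensionality_dep => y;
    apply functional_extensionality_dep => p; apply Hfg.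
  reflexivity.
Qed.

Lemma EE_spec a :
  (exists t, EE a = Some t /\ (exists y, t = c y) /\
     forall b, lt b a -> exists s, EE b = Some s /\ lt s t) \/
  (EE a = None /\ ~ exists t, (exists y, t = c y) /\
     forall b, lt b a -> exists s, EE b = Some s /\ lt s t).
Proof.
  rewrite EE_eq /FE.
  case: excluded_middle_informative => [h|h].
  - left. case: (constructive_indefinite_description _ h) => t [Ht1 Ht2] /=.
    exists t; split => //; split => // b hb; exact: Ht2 b hb.
  - right; split => // [[t [H1 H2]]]; apply: h; exists t; split => // b hb; exact: H2.
Qed.

Lemma reg_inj : exists g : O -> A, injective g.
Proof.
  have [irr [trans [tri wf]]] := Hwo.
  have Hall : forall a, EE a <> None.
  { intro a; induction (wf a) as [a _ IH] => Ha.
    case: (EE_spec a) => [[t [Ht _]]|[_ Hn]]; first by rewrite Ht in Ha.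
    pose f (x : {b : O | lt b a}) : O :=
      match EE (proj1_sig x) with Some s => s | None => a end.
    apply: (Hreg a f) => c0.
    apply: NNPP => Hnc.
    have Hb : forall b (hb : lt b a), lt (f (exist _ b hb)) c0.
    { move=> b hb; case: (tri (f (exist _ b hb)) c0) => [//|[He|He]];
      exfalso; apply: Hnc; exists (exist _ b hb); [left|right] => //. }
    case: (Hcof c0) => y Hy.
    apply: Hn; exists (c y); split; first by exists y.
    move=> b hb; move: (Hb b hb); rewrite /f /=.
    case E: (EE b) => [s|]; last by case: (IH b hb).
    move=> Hs; exists s; split => //; case: Hy => [<-|Hy] //; exact: trans Hs Hy. }
  have Hdef : forall a, exists t, EE a = Some t /\ exists y, t = c y.
  { move=> a; case: (EE_spec a) => [[t [Ht [Hy _]]]|[Hn _]]; last by case: (Hall a).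
    by exists t. }
  have Hch : forall a, exists y, EE a = Some (c y).
  { move=> a; case: (Hdef a) => t [Ht [y Hy]]; exists y; by rewrite Ht Hy. }
  have [gg Hg] := @choice O A (fun a y => EE a = Some (c y)) Hch.
  exists gg => a b Hab.
  have mono : forall a b, lt b a -> lt (c (gg b)) (c (gg a)).
  { move=> a' b' hb; case: (EE_spec a') => [[t [Ht [_ H]]]|[Hn _]]; last by case: (Hall a').
    case: (H b' hb) => s [Hs Hst]. rewrite Hg in Ht; rewrite Hg in Hs.
    have e1 : t = c (gg a') by case: Ht. have e2 : s = c (gg b') by case: Hs. by rewrite -e1 -e2. }
  case: (tri a b) => [h|[//|h]]; have := mono _ _ h; rewrite Hab => /irr [].
Qed.
End Reg.

Lemma down_hom {O : Type} (lt : O -> O -> Prop) (o : obj O) (l : nat) :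
  forall (a b : O), Pilot.Defs.le lt a b -> Hom lt (ext o l b) (ext o l a).
Proof.
  move=> a b hab; exists (fun x => x) => x /=.
  case: (insub _) => [y|]; [by left|exact hab].
Defined.

Theorem mainTheorem5 (O : Type) (lt : O -> O -> Prop)
  (Hwo : is_wellorder lt) (Hlim : is_limit lt) (Hreg : is_regular lt)
  (fresh : {fset nat} -> nat) (Hfresh : forall E, fresh E \notin E)
  (G : psh lt) (HG : is_presheaf G)
  (X : epsh G) (HX : is_family X)
  (Hcard : forall (o : obj O) (g : pob G o), card_lt_rho O (eob X g))
  (phi : epsh (prodp (compr X) (Clk lt))) (Hphi : is_predicate phi)
  (o : obj O) (g : pob G o) :
  let l := fresh (clocks o) in
  (exists x : eob X g, forall a : O,
     inhabited (@eob _ _ _ phi (ext o l a)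
       (existT _ (pact G (iotaH lt o l a) g)
                 (eact X (iotaH lt o l a) (erefl (pact G (iotaH lt o l a) g)) x),
        newcl (clocks o) l)))
  <->
  (forall a : O, exists x : eob X (pact G (iotaH lt o l a) g),
     inhabited (@eob _ _ _ phi (ext o l a)
       (existT _ (pact G (iotaH lt o l a) g) x, newcl (clocks o) l))).
Proof.
  move=> l; split.
  - move=> [x Hx] a; exists (eact X (iotaH lt o l a) (erefl (pact G (iotaH lt o l a) g)) x).
    exact: Hx a.
  - move=> HB.
    have Hl : l \notin clocks o := Hfresh _.
    pose Q y a := inhabited (@eob _ _ _ phi (ext o l a)
       (existT _ (pact G (iotaH lt o l a) g)
                 (eact X (iotaH lt o l a) (erefl (pact G (iotaH lt o l a) g)) y),
        newcl (clocks o) l)).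
    have H1 : forall a, exists y, Q y a.
    { move=> a; case: (HB a) => x Hx.
      case: (proj2 HX o g l a Hl) => finv K1 K2.
      exists (finv x); rewrite /Q.
      have K := K2 x; simpl in K; by rewrite K. }
    have Hdown : forall y a b, Pilot.Defs.le lt a b -> Q y b -> Q y a.
    { move=> y a b hab [q].
      set m := down_hom lt o l a b hab.
      have h2 : pact G m (pact G (iotaH lt o l b) g) = pact G (iotaH lt o l a) g.
      { symmetry; apply: (proj2 HG) => //. }
      have hX : eact X m h2 (eact X (iotaH lt o l b) (erefl _) y)
                = eact X (iotaH lt o l a) (erefl _) y.
      { symmetry; apply: (proj2 (proj1 HX)) => //. }
      have hP : pact (prodp (compr X) (Clk lt)) m
          (existT _ (pact G (iotaH lt o l b) g)
                 (eact X (iotaH lt o l b) (erefl (pact G (iotaH lt o l b) g)) y),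
           newcl (clocks o) l) =
          (existT _ (pact G (iotaH lt o l a) g)
                 (eact X (iotaH lt o l a) (erefl (pact G (iotaH lt o l a) g)) y),
           newcl (clocks o) l).
      { rewrite /= -hX; clear hX; congr (_, _).
        move: h2; generalize (pact G (iotaH lt o l a) g) => gg h2.
        by destruct h2. }
      exact: (inhabits (eact phi m hP q)). }
    case: (classic (exists y, forall a, Q y a)) => [[y Hy]|Hn]; first by exists y.
    exfalso.
    have Hc : forall y, exists a, ~ Q y a.
    { move=> y; apply: NNPP => Hy; apply: Hn; exists y => a; apply: NNPP => Hq.
      apply: Hy; by exists a. }
    have [c Hc'] := @choice _ O (fun y a => ~ Q y a) Hc.
    have [_ [_ [tri _]]] := Hwo.
    have Hcof : forall a0, exists y, Pilot.Defs.le lt a0 (c y).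
    { move=> a0; case: (H1 a0) => y Hy; exists y.
      case: (tri a0 (c y)) => [h|[h|h]]; [by right|by left|].
      exfalso; apply: (Hc' y); apply: (Hdown y _ a0) => //; by right. }
    have [gi Hgi] := @reg_inj O lt Hwo Hreg _ c Hcof.
    by case: (proj2 (Hcard o g)); exists gi.
Qed.
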